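(* Let $d\ge1$, $0<c\le\infty$, $X=(0,c)$, $X_{\mathrm{SYM}}=(-c,0)\cup(0,c)$, $\mathbb{X}=(X_{\mathrm{SYM}})^d$. For $i=1,\dots,d$ let $w_i\in C^2(X)$ be strictly positive, $p_i\in C^2(X)$ real-valued and nonvanishing, $q_i\in C^1(X)$ real-valued, $a_i\ge0$ constants, $\mu_i(dx)=w_i(x)dx$ on $X$, $\delta_i=p_i\frac{d}{dx}+q_i$, $\delta_i^*=-p_i\frac{d}{dx}+q_i-p_i\frac{w_i'}{w_i}-p_i'$, $L_i=a_i+\delta_i^*\delta_i$. Assume for each $i$ there is an orthonormal basis $\{\varphi^{(i)}_k:k\in\mathbb{N}\}$ of $L^2(X,\mu_i)$ with $\varphi^{(i)}_k\in C^\infty(X)$, $L_i\varphi^{(i)}_k=\lambda^{(i)}_k\varphi^{(i)}_k$, $\lambda^{(i)}_0<\lambda^{(i)}_1<\dots\to\infty$, $\delta_i\varphi^{(i)}_k\in L^2(X,\mu_i)$ and $\langle\delta_i\varphi^{(i)}_k,\delta_i\varphi^{(i)}_m\rangle_{\mu_i}=\langle\delta_i^*\delta_i\varphi^{(i)}_k,\varphi^{(i)}_m\rangle_{\mu_i}$ for all $k,m$; assume moreover $a_i=\lambda^{(i)}_0$ for every $i$. Extend $w_i,p_i,\varphi^{(i)}_k$ evenly and $q_i$ oddly to $X_{\mathrm{SYM}}$, define $\Phi^{(i)}_n=\frac1{\sqrt2}\varphi^{(i)}_{n/2}$ for even $n$, $\Phi^{(i)}_n=-\frac1{\sqrt2}(\lambda^{(i)}_{(n+1)/2}-a_i)^{-1/2}\delta_i\varphi^{(i)}_{(n+1)/2}$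 for odd $n$, $\Phi_n=\Phi^{(1)}_{n_1}\otimes\cdots\otimes\Phi^{(d)}_{n_d}$ for $n\in\mathbb{N}^d$, with the convention $\Phi_n\equiv0$ if $n\in\mathbb{Z}^d\setminus\mathbb{N}^d$, and $\langle n\rangle_j=\lfloor\frac{n_j+1}2\rfloor$. Let $$D_jf(x)=p_j(x_j)\partial_{x_j}f(x)+q_j(x_j)\tfrac{f(x)+f(\sigma_jx)}{2}+\Big[p_j(x_j)\tfrac{w_j'(x_j)}{w_j(x_j)}+p_j'(x_j)-q_j(x_j)\Big]\tfrac{f(x)-f(\sigma_jx)}{2}$$ ($\sigma_j$ the reflection changing the sign of the $j$th coordinate). Then for $j=1,\dots,d$, $N\ge1$ and $n\in\mathbb{N}^d$, $$D_j^N\Phi_n=\begin{cases}(-1)^{N/2}\big(\lambda^{(j)}_{\langle n\rangle_j}-a_j\big)^{N/2}\Phi_n,& N\text{ even},\\ (-1)^{n_j+1+(N-1)/2}\big(\lambda^{(j)}_{\langle n\rangle_j}-a_j\big)^{N/2}\Phi_{n-(-1)^{n_j}e_j},& N\text{ odd},\end{cases}$$ where $e_j$ is the $j$th coordinate vector.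
   Context: $\mathbb{N}=\{0,1,2,\dots\}$; $\lfloor\cdot\rfloor$ is the floor function. *)

(* Defs.v *)
From HB Require Import structures.
From mathcomp Require Import all_boot all_order all_algebra.
From mathcomp Require Import all_classical all_reals all_analysis.
Set Implicit Arguments. Unset Strict Implicit. Unset Printing Implicit Defensive.
Import Order.TTheory GRing.Theory Num.Theory.
Import numFieldNormedType.Exports.
Local Open Scope classical_set_scope.
Local Open Scope ring_scope.

Section Defs.
Variable R : realType.

Definition Xset (c : \bar R) : set R := [set x | 0 < x /\ (x%:E < c)%E].
Definition Xsym (c : \bar R) : set R := [set x | Xset c x \/ Xset c (- x)].
Definition XX (d : nat) (c : \bar R) : set ('I_d -> R) :=
  [set x | forall i, Xsym c (x i)].

Definition Cn_on (n : nat) (A : set R) (f : R -> R) : Prop :=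
  (forall k, (k < n)%N -> forall x, A x -> derivable (derive1n k f) x 1) /\
  (forall x, A x -> {for x, continuous (derive1n n f)}).
Definition Cinf_on (A : set R) (f : R -> R) : Prop := forall n, Cn_on n A f.

Definition delta (p q : R -> R) (f : R -> R) : R -> R :=
  fun x => p x * derive1 f x + q x * f x.
Definition delta_star (w p q : R -> R) (g : R -> R) : R -> R :=
  fun x => - (p x * derive1 g x) + (q x - p x * derive1 w x / w x - derive1 p x) * g x.

Definition L2 (c : \bar R) (w f : R -> R) : Prop :=
  measurable_fun (Xset c) f /\
  (\int[lebesgue_measure]_(x in Xset c) ((f x) ^+ 2 * w x)%:E < +oo)%E.
Definition ip (c : \bar R) (w f g : R -> R) : \bar R :=
  (\int[lebesgue_measure]_(x in Xset c) (f x * g x * w x)%:E)%E.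

Definition ONB (c : \bar R) (w : R -> R) (phi : nat -> R -> R) : Prop :=
  (forall k, L2 c w (phi k)) /\
  (forall k m, ip c w (phi k) (phi m) = (k == m)%:R%:E) /\
  (forall f, L2 c w f -> (forall k, ip c w f (phi k) = 0%E) -> ip c w f f = 0%E).

Definition even_ext (f : R -> R) : R -> R := fun x => f `|x|.
Definition odd_ext (f : R -> R) : R -> R := fun x => Num.sg x * f `|x|.

Definition Phi1 (p q : R -> R) (a : R) (lam : nat -> R) (phi : nat -> R -> R)
  (n : nat) : R -> R :=
  if ~~ odd n then fun x => (Num.sqrt 2)^-1 * even_ext (phi n./2) x
  else fun x => - ((Num.sqrt 2)^-1 * (Num.sqrt (lam (n.+1)./2 - a))^-1 *
     delta (even_ext p) (odd_ext q) (even_ext (phi (n.+1)./2)) x).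

Definition Phi (d : nat) (p q : 'I_d -> R -> R) (a : 'I_d -> R)
  (lam : 'I_d -> nat -> R) (phi : 'I_d -> nat -> R -> R) (n : 'I_d -> int) :
  ('I_d -> R) -> R :=
  fun x => if [forall i, (0 <= n i)%R]
    then \prod_(i < d) Phi1 (p i) (q i) (a i) (lam i) (phi i) `|n i|%N (x i)
    else 0.

Definition upd (d : nat) (x : 'I_d -> R) (j : 'I_d) (t : R) : 'I_d -> R :=
  fun i => if i == j then t else x i.
Definition refl (d : nat) (j : 'I_d) (x : 'I_d -> R) : 'I_d -> R :=
  fun i => if i == j then - x i else x i.
Definition partial (d : nat) (j : 'I_d) (f : ('I_d -> R) -> R) (x : 'I_d -> R) : R :=
  derive1 (fun t => f (upd x j t)) (x j).

Definition Dj (d : nat) (w p q : 'I_d -> R -> R) (j : 'I_d)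
  (f : ('I_d -> R) -> R) : ('I_d -> R) -> R :=
  fun x =>
    let we := even_ext (w j) in let pe := even_ext (p j) in
    let qe := odd_ext (q j) in
    pe (x j) * partial j f x + qe (x j) * ((f x + f (refl j x)) / 2)
    + (pe (x j) * derive1 we (x j) / we (x j) + derive1 pe (x j) - qe (x j))
      * ((f x - f (refl j x)) / 2).

End Defs.

(* Main.v *)
Require Import Defs.
From HB Require Import structures.
From mathcomp Require Import all_boot all_order all_algebra.
From mathcomp Require Import all_classical all_reals all_analysis.
From mathcomp Require Import measurable_realfun.
From mathcomp Require Import lra ring.
Import Order.TTheory GRing.Theory Num.Theory.
Import numFieldNormedType.Exports.
Local Open Scope classical_set_scope.
Local Open Scope ring_scope.

Set Implicit Arguments. Unset Strict Implicit. Unset Printing Implicit Defensive.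


Section Basic.
Variable R : realType.
Implicit Types (c : \bar R).

Lemma Xset_open c : open (Xset c).
Proof.
have -> : Xset c = [set x : R | x > 0] `&` [set x | (x%:E < c)%E].
  by apply/seteqP; split => x /=.
apply: openI; first exact: open_gt.
case: c => [r||].
- have -> : [set x : R | (x%:E < r%:E)%E] = [set x | x < r].
    by apply/seteqP; split => x /=; rewrite lte_fin.
  exact: open_lt.
- have -> : [set x : R | (x%:E < +oo)%E] = setT.
    by apply/seteqP; split => x //= _; rewrite ltey.
  exact: openT.
- have -> : [set x : R | (x%:E < -oo)%E] = set0.
    by apply/seteqP; split => x //=; rewrite ltNge leNye.
  exact: open0.
Qed.

Lemma Xsym_open c : open (Xsym c).
Proof.
have -> : Xsym c = Xset c `|` [set - x | x in Xset c].
  apply/seteqP; split => x /=.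
    case=> [h|h]; [by left|right; exists (- x); [exact: h|exact: opprK]].
  by case=> [h|[y hy <-]]; [left|right; rewrite opprK].
by apply: openU; [exact: Xset_open | apply: openN; exact: Xset_open].
Qed.

Lemma Xsym_nbhs c t : Xsym c t -> \forall y \near t, Xsym c y.
Proof. by move=> h; apply: open_nbhs_nbhs; split => //; exact: Xsym_open. Qed.

Lemma Xsym_neq0 c t : Xsym c t -> t != 0.
Proof. by case=> -[h _]; [exact: lt0r_neq0 | rewrite -oppr_eq0; exact: lt0r_neq0]. Qed.

Lemma Xsym_abs c t : Xsym c t -> Xset c `|t|.
Proof.
case=> h; have [t0|t0] := leP 0 t.
- by rewrite ger0_norm.
- by move: h => [+ _]; rewrite ltNge (ltW t0).
- by move: h => [+ _]; rewrite oppr_gt0 ltNge t0.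
- by rewrite ltr0_norm.
Qed.

Lemma Xsym_N c t : Xsym c t -> Xsym c (- t).
Proof. by case=> h; [right; rewrite opprK|left]. Qed.


End Basic.
Section Deriv.
Variable R : realType.

Lemma sg_near (t : R) : t != 0 -> \forall y \near t, Num.sg y = Num.sg t.
Proof.
case: (ltgtP t 0) => // t0 _.
- near=> y; rewrite !ltr0_sg //; near: y; exact: lt_nbhsl.
- near=> y; rewrite !gtr0_sg //; near: y; exact: lt_nbhsr.
Unshelve. all: by end_near. Qed.

Lemma sg_sq (t : R) : t != 0 -> Num.sg t * Num.sg t = 1.
Proof. by move=> t0; rewrite -expr2 sqr_sg t0. Qed.

Lemma abs_near (t : R) : t != 0 -> \forall y \near t, `|y| = Num.sg t * y.
Proof.
move=> t0; near=> y; rewrite normrEsg; congr (_ * _); near: y; exact: sg_near.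
Unshelve. all: by end_near. Qed.

Lemma derivable_scal (k t : R) : derivable (fun y : R => k * y) t 1.
Proof.
have -> : (fun y : R => k * y) = k \*: (@id R) by apply/funext.
exact/derivableZ/derivable_id.
Qed.

Lemma derive1_scal (k t : R) : derive1 (fun y : R => k * y) t = k.
Proof.
rewrite (derive1Ml (f := id)) ?mulr1; last exact: derivable_id.
by rewrite derive1E derive_id mulr1.
Qed.

Lemma near_derive1 (f g : R -> R) t : (\forall y \near t, f y = g y) ->
  derive1 f t = derive1 g t.
Proof. by move=> h; rewrite !derive1E; apply: near_eq_derive. Qed.



Lemma even_der (f : R -> R) (t : R) : t != 0 -> derivable f `|t| 1 ->
  derivable (fun y => f `|y|) t 1 /\
  derive1 (fun y => f `|y|) t = Num.sg t * derive1 f `|t|.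
Proof.
move=> t0 df.
have nr : \forall y \near t, (f \o (fun y => Num.sg t * y)) y = f `|y|.
  near=> y; rewrite /= -[in RHS](_ : Num.sg t * y = `|y|) //.
  by apply/esym; near: y; exact: abs_near.
have ht : Num.sg t * t = `|t| by rewrite -normrEsg.
have dg : derivable (f \o (fun y => Num.sg t * y)) t 1.
  apply/derivable1_diffP/differentiable_comp; apply/derivable1_diffP.
    exact: derivable_scal.
  by rewrite ht.
split.
  move: dg; apply: near_eq_derivable.
  exact: nr.

rewrite -(near_derive1 nr) derive1_comp ?derive1_scal ?ht 1?mulrC //.
Unshelve. all: by end_near. Qed.

End Deriv.
Section Int0.
Variable R : realType.

Lemma cont_int0 (A : set R) (g : R -> R) : open A ->
  (forall x, A x -> {for x, continuous g}) ->
  (forall x, A x -> 0 <= g x) ->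
  (\int[lebesgue_measure]_(x in A) (g x)%:E = 0)%E -> forall x, A x -> g x = 0.
Proof.
move=> oA cg g0 I0 x Ax; apply/eqP; rewrite eq_le g0 // andbT leNgt.
apply/negP => gx.
have mA : measurable A by exact: open_measurable.
have mg : measurable_fun A g.
  by apply: open_continuous_measurable_fun => // y /set_mem; exact: cg.
have mgE : measurable_fun A (EFin \o g) by exact/measurable_EFinP.
have cgx : g @ x --> g x := cg x Ax.
have : \forall y \near x, A y /\ g x / 2 < g y.
  near=> y; split.
    near: y; apply: open_nbhs_nbhs; split => //.
  have : `|g x - g y| < g x / 2.
    near: y; apply: (cvgr_dist_lt _ _ cgx).
    by rewrite divr_gt0.
  move=> h; have := ler_norm (g x - g y); lra.
move=> /nbhs_ballP [e /= e0 He].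
rewrite ball_itv in He.
set B := `](x - e), (x + e)[%classic.
have BA : B `<=` A by move=> y /He [].
have mB : measurable B by exact: measurable_itv.
have : (((g x / 2) * (2 * e))%:E <= \int[lebesgue_measure]_(y in A) (g y)%:E)%E.
  apply: (@le_trans _ _ (\int[lebesgue_measure]_(y in B) (g y)%:E)%E); last first.
    apply: ge0_subset_integral => // y Ay; rewrite lee_fin; exact: g0.
  apply: (@le_trans _ _ (\int[lebesgue_measure]_(y in B) (cst (g x / 2)%:E) y)%E).
    have hm : lebesgue_measure (`](x - e), (x + e)[%classic : set R) =
        ((x + e) - (x - e))%:E.
      rewrite lebesgue_measure_itv /= lte_fin.
      by have -> : x - e < x + e by lra.
    rewrite integral_cst // /B.
    first [rewrite hm | rewrite [X in (_ * X)%E]hm | (have -> : forall z, (z * lebesgue_measure_lebesgue_measure__canonical__measure_function_Measure R `](x - e), (x + e)[%classic = z * ((x + e) - (x - e))%:E)%E by move=> z; rewrite -hm)].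
    by rewrite -EFinM lee_fin; have -> : (x + e) - (x - e) = 2 * e by lra.
  apply: ge0_le_integral => //.
  - by move=> y _; rewrite lee_fin; lra.
  - exact: measurable_funS mgE.
  - by move=> y /He [_ h]; rewrite lee_fin ltW.
rewrite I0 lee_fin; apply/negP; rewrite -ltNge; apply: mulr_gt0; lra.
Unshelve. all: by end_near. Qed.

End Int0.

Lemma half_add (R : realType) (x : R) : (x + x) / 2 = x.
Proof. by field. Qed.
Lemma half_sub (R : realType) (x : R) : (x - - x) / 2 = x.
Proof. by field. Qed.
Section OneD.
Variable R : realType.
Variables (c : \bar R) (w p q : R -> R) (a : R) (lam : nat -> R)
  (phi : nat -> R -> R).
Hypothesis Hw : Cn_on 2 (Xset c) w.
Hypothesis Hwpos : forall x, Xset c x -> 0 < w x.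
Hypothesis Hp : Cn_on 2 (Xset c) p.
Hypothesis Hq : Cn_on 1 (Xset c) q.
Hypothesis Hphi : forall k, Cinf_on (Xset c) (phi k).
Hypothesis Heig : forall k x, Xset c x ->
  a * phi k x + delta_star w p q (delta p q (phi k)) x = lam k * phi k x.
Hypothesis Hlam : forall k, lam k < lam k.+1.
Hypothesis Ha : a = lam 0%N.
Hypothesis HL2 : forall k, L2 c w (delta p q (phi k)).
Hypothesis Hip : forall k m,
  ip c w (delta p q (phi k)) (delta p q (phi m))
  = ip c w (delta_star w p q (delta p q (phi k))) (phi m).

Definition D1 (F : R -> R) (t : R) : R :=
  even_ext p t * derive1 F t + odd_ext q t * ((F t + F (- t)) / 2)
  + (even_ext p t * derive1 (even_ext w) t / even_ext w t
     + derive1 (even_ext p) t - odd_ext q t) * ((F t - F (- t)) / 2).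

Lemma dw u : Xset c u -> derivable w u 1.
Proof. by move=> Xu; have := Hw.1 0%N isT u Xu; rewrite derive1n0. Qed.
Lemma dp u : Xset c u -> derivable p u 1.
Proof. by move=> Xu; have := Hp.1 0%N isT u Xu; rewrite derive1n0. Qed.
Lemma dq u : Xset c u -> derivable q u 1.
Proof. by move=> Xu; have := Hq.1 0%N isT u Xu; rewrite derive1n0. Qed.
Lemma dphi k u : Xset c u -> derivable (phi k) u 1.
Proof. by move=> Xu; have := (Hphi k 1).1 0%N isT u Xu; rewrite derive1n0. Qed.
Lemma ddphi k u : Xset c u -> derivable (derive1 (phi k)) u 1.
Proof. by move=> Xu; have := (Hphi k 2).1 1%N isT u Xu; rewrite derive1n1. Qed.

Lemma ddelta k u : Xset c u -> derivable (delta p q (phi k)) u 1.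
Proof.
move=> Xu.
have -> : delta p q (phi k) = (p * derive1 (phi k)) + (q * phi k) by [].
apply: derivableD; apply: derivableM.
- exact: dp. - exact: ddphi. - exact: dq. - exact: dphi.
Qed.

Lemma cont_of (f : R -> R) u : derivable f u 1 -> {for u, continuous f}.
Proof. by move=> /derivable1_diffP; exact: differentiable_continuous. Qed.

Lemma delta0 u : Xset c u -> delta p q (phi 0%N) u = 0.
Proof.
move=> Xu.
set g := fun x => delta p q (phi 0%N) x * delta p q (phi 0%N) x * w x.
have g0 : forall x, Xset c x -> 0 <= g x.
  move=> x Xx; rewrite /g mulr_ge0 //; first by rewrite -expr2 sqr_ge0.
  exact/ltW/Hwpos.
have cg : forall x, Xset c x -> {for x, continuous g}.
  move=> x Xx; apply: cont_of.
  have -> : g = (delta p q (phi 0%N) * delta p q (phi 0%N)) * w by [].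
  by apply: derivableM; [apply: derivableM|]; [exact: ddelta|exact: ddelta|exact: dw].
have I0 : (\int[lebesgue_measure]_(x in Xset c) (g x)%:E = 0)%E.
  have := Hip 0%N 0%N; rewrite /ip => ->.
  rewrite -(integral0 lebesgue_measure (Xset c)); apply: eq_integral.
  move=> x /set_mem Xx /=.
  have := @Heig 0%N (x : R) Xx; rewrite -Ha => h.
  have -> : delta_star w p q (delta p q (phi 0%N)) x = 0 by lra.
  by rewrite !mul0r.
have := cont_int0 (@Xset_open _ c) cg g0 I0 Xu.
rewrite /g => /eqP; rewrite mulf_eq0 (gt_eqF (Hwpos Xu)) orbF mulf_eq0 orbb.
by move/eqP.
Qed.

End OneD.
Section OneD2.
Variable R : realType.
Variables (c : \bar R) (w p q : R -> R) (a : R) (lam : nat -> R)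
  (phi : nat -> R -> R).
Hypothesis Hw : Cn_on 2 (Xset c) w.
Hypothesis Hwpos : forall x, Xset c x -> 0 < w x.
Hypothesis Hp : Cn_on 2 (Xset c) p.
Hypothesis Hq : Cn_on 1 (Xset c) q.
Hypothesis Hphi : forall k, Cinf_on (Xset c) (phi k).
Hypothesis Heig : forall k x, Xset c x ->
  a * phi k x + delta_star w p q (delta p q (phi k)) x = lam k * phi k x.
Hypothesis Hlam : forall k, lam k < lam k.+1.
Hypothesis Ha : a = lam 0%N.
Hypothesis Hip : forall k m,
  ip c w (delta p q (phi k)) (delta p q (phi m))
  = ip c w (delta_star w p q (delta p q (phi k))) (phi m).

Local Notation r := (Num.sqrt 2)^-1.
Local Notation s k := (Num.sqrt (lam k.+1 - a)).
Local Notation P1 := (Phi1 p q a lam phi).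

Lemma lam_gt k : a < lam k.+1.
Proof.
rewrite Ha; elim: k => [|k IH]; first exact: Hlam.
exact: lt_trans IH (Hlam _).
Qed.

Lemma s_gt0 k : 0 < s k.
Proof. by rewrite sqrtr_gt0 subr_gt0 lam_gt. Qed.

Lemma s_sq k : s k * s k = lam k.+1 - a.
Proof. by rewrite -expr2 sqr_sqrtr // subr_ge0 ltW // lam_gt. Qed.

Lemma Phi1_even k x : P1 k.*2 x = r * phi k `|x|.
Proof. by rewrite /Phi1 odd_double /= doubleK. Qed.

Lemma Phi1_evenE k : P1 k.*2 = fun x => r * phi k `|x|.
Proof. by apply/funext => x; rewrite Phi1_even. Qed.

Lemma Phi1_odd k x : P1 k.*2.+1 x =
  - (r * (s k)^-1 * delta (even_ext p) (odd_ext q) (even_ext (phi k.+1)) x).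
Proof.
by rewrite /Phi1 /= odd_double /= doubleK.
Qed.

Lemma delta_ext k t : Xsym c t ->
  delta (even_ext p) (odd_ext q) (even_ext (phi k)) t
  = Num.sg t * delta p q (phi k) `|t|.
Proof.
move=> Xt; rewrite /delta /even_ext /odd_ext.
rewrite (even_der (Xsym_neq0 Xt) (dphi Hphi (k:=k) (Xsym_abs Xt))).2.
by ring.
Qed.

Lemma der_even k t : Xsym c t ->
  derivable (P1 k.*2) t 1 /\
  derive1 (P1 k.*2) t = r * (Num.sg t * derive1 (phi k) `|t|).
Proof.
move=> Xt; rewrite Phi1_evenE.
have [d1 d2] := even_der (Xsym_neq0 Xt) (dphi Hphi (k:=k) (Xsym_abs Xt)).
split; last by rewrite derive1Ml // d2.
have -> : (fun x => r * phi k `|x|) = r \*: (fun x => phi k `|x|) by first [apply/funext | apply: funext => ? // | reflexivity].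
exact: derivableZ.
Qed.

Lemma D1_even k t : Xsym c t ->
  D1 w p q (P1 k.*2) t = Num.sg t * r * delta p q (phi k) `|t|.
Proof.
move=> Xt; rewrite /D1 (der_even k Xt).2 !Phi1_even normrN /even_ext /odd_ext /delta.
by rewrite subrr mul0r mulr0 addr0 half_add; ring.
Qed.

Lemma odd_near k t : Xsym c t ->
  \forall y \near t, P1 k.*2.+1 y =
    (- (r * (s k)^-1) * Num.sg t) * delta p q (phi k.+1) `|y|.
Proof.
move=> Xt; near=> y.
have Xy : Xsym c y by near: y; exact: Xsym_nbhs.
have sy : Num.sg y = Num.sg t by near: y; exact: sg_near (Xsym_neq0 Xt).
by rewrite Phi1_odd delta_ext // sy; ring.
Unshelve. all: by end_near. Qed.

Lemma der_odd k t : Xsym c t ->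
  derivable (P1 k.*2.+1) t 1 /\
  derive1 (P1 k.*2.+1) t = - (r * (s k)^-1) * derive1 (delta p q (phi k.+1)) `|t|.
Proof.
move=> Xt.
set K := - (r * (s k)^-1) * Num.sg t.
have nr := odd_near k Xt.
have [d1 d2] := even_der (Xsym_neq0 Xt) (ddelta Hp Hq Hphi (k:=k.+1) (Xsym_abs Xt)).
have dK : derivable (fun y => K * delta p q (phi k.+1) `|y|) t 1.
  have -> : (fun y => K * delta p q (phi k.+1) `|y|) =
    K \*: (fun y => delta p q (phi k.+1) `|y|) by first [apply/funext | apply: funext => ? // | reflexivity].
  exact: derivableZ.
have nr' : \forall y \near t, K * delta p q (phi k.+1) `|y| = P1 k.*2.+1 y.
  by near=> y; apply/esym; near: y; exact: nr.
split.
  by move: dK; apply: near_eq_derivable; exact: nr'.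
rewrite -(near_derive1 nr') derive1Ml // d2 /K.
have := sg_sq (Xsym_neq0 Xt); move: (Num.sg t) => S SS.
have -> : forall A B : R, A * S * (S * B) = A * (S * S) * B by move=> *; ring.
by rewrite SS mulr1.
Unshelve. all: by end_near. Qed.

Lemma D1_odd k t : Xsym c t ->
  D1 w p q (P1 k.*2.+1) t = s k * P1 (k.+1).*2 t.
Proof.
move=> Xt.
have Xnt := Xsym_N Xt.
have Xu := Xsym_abs Xt.
rewrite /D1 (der_odd k Xt).2 !Phi1_odd !delta_ext // sgrN normrN Phi1_even.
rewrite (even_der (Xsym_neq0 Xt) (dw Hw Xu)).2.
rewrite (even_der (Xsym_neq0 Xt) (dp Hp Xu)).2.
have he := Heig k.+1 Xu.
rewrite /delta_star in he.
have SS := sg_sq (Xsym_neq0 Xt).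
have ss := s_sq k.
have s0 : s k != 0 by rewrite gt_eqF // s_gt0.
rewrite /even_ext /odd_ext.
move: he SS ss s0.
set S := Num.sg t; set u := `|t|; set d := delta p q (phi k.+1) u.
set d' := derive1 (delta p q (phi k.+1)) u; set sk := s k.
move=> he SS ss s0.
have wu0 : w u != 0 by rewrite gt_eqF // Hwpos.
have s2 : Num.sqrt 2 != 0 :> R by rewrite gt_eqF // sqrtr_gt0 ltr0n.
have H1 : - (p u * d') - (p u * derive1 w u / w u + derive1 p u - q u) * d
    = sk * sk * phi k.+1 u.
  by rewrite ss; lra.
transitivity (r / sk * (- (p u * d') - (S * S) *
  ((p u * derive1 w u / w u + derive1 p u - q u) * d))).
  by field; rewrite wu0 s0 s2.
rewrite SS mul1r H1.
by field; rewrite ?wu0 ?s0 ?s2.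
Qed.

Lemma D1_zero t : Xsym c t -> D1 w p q (P1 0%N) t = 0.
Proof.
move=> Xt; have := D1_even 0%N Xt; rewrite /= => ->.
by rewrite (delta0 Hw Hwpos Hp Hq Hphi Heig Ha Hip (Xsym_abs Xt)) mulr0.
Qed.

Lemma D1_evenS k t : Xsym c t ->
  D1 w p q (P1 (k.+1).*2) t = - s k * P1 k.*2.+1 t.
Proof.
move=> Xt; rewrite D1_even // Phi1_odd delta_ext //.
have s0 : s k != 0 by rewrite gt_eqF // s_gt0.
have s2 : Num.sqrt 2 != 0 :> R by rewrite gt_eqF // sqrtr_gt0 ltr0n.
by field; rewrite s0 s2.
Qed.

Lemma der_P1 n t : Xsym c t -> derivable (P1 n) t 1.
Proof.
move=> Xt; rewrite -[n]odd_double_half; case: (odd n) => /=.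
  by rewrite add1n; exact: (der_odd _ Xt).1.
by rewrite add0n; exact: (der_even _ Xt).1.
Qed.

End OneD2.
Section Multi.
Variable R : realType.
Variables (d : nat) (c : \bar R) (w p q : 'I_d -> R -> R) (a : 'I_d -> R)
  (lam : 'I_d -> nat -> R) (phi : 'I_d -> nat -> R -> R).
Hypothesis Hw : forall i, Cn_on 2 (Xset c) (w i) /\ (forall x, Xset c x -> 0 < w i x).
Hypothesis Hp : forall i, Cn_on 2 (Xset c) (p i) /\ (forall x, Xset c x -> p i x != 0).
Hypothesis Hq : forall i, Cn_on 1 (Xset c) (q i).
Hypothesis Hphi : forall i k, Cinf_on (Xset c) (phi i k).
Hypothesis Heig : forall i k x, Xset c x ->
     a i * phi i k x
     + delta_star (w i) (p i) (q i) (delta (p i) (q i) (phi i k)) x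
     = lam i k * phi i k x.
Hypothesis Hlam : forall i k, lam i k < lam i k.+1.
Hypothesis Hip : forall i k m,
     ip c (w i) (delta (p i) (q i) (phi i k)) (delta (p i) (q i) (phi i m))
     = ip c (w i) (delta_star (w i) (p i) (q i) (delta (p i) (q i) (phi i k)))
                  (phi i m).
Hypothesis Ha : forall i, a i = lam i 0%N.
Variable j : 'I_d.

Local Notation P1 i := (Phi1 (p i) (q i) (a i) (lam i) (phi i)).
Definition Phin (n : 'I_d -> nat) : ('I_d -> R) -> R :=
  Phi p q a lam phi (fun i => (n i)%:Z).
Local Notation DJ := (Dj w p q j).

Lemma PhinE n y : Phin n y = \prod_(i < d) P1 i (n i) (y i).
Proof.
rewrite /Phin /Phi; have -> : [forall i, (0 <= (n i)%:Z)%R] by apply/forallP.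
by apply: eq_bigr => i _; rewrite absz_nat.
Qed.

Definition Qn (n : 'I_d -> nat) (y : 'I_d -> R) :=
  \prod_(i < d | i != j) P1 i (n i) (y i).

Lemma Phin_split n y : Phin n y = P1 j (n j) (y j) * Qn n y.
Proof. by rewrite PhinE (bigD1 j). Qed.

Lemma Qn_upd n x t : Qn n (upd x j t) = Qn n x.
Proof. by apply: eq_bigr => i ij; rewrite /upd (negbTE ij). Qed.

Lemma Qn_refl n x : Qn n (refl j x) = Qn n x.
Proof. by apply: eq_bigr => i ij; rewrite /refl (negbTE ij). Qed.

Definition nupd (n : 'I_d -> nat) (m : nat) : 'I_d -> nat :=
  fun i => if i == j then m else n i.

Lemma Qn_nupd n m y : Qn (nupd n m) y = Qn n y.
Proof. by apply: eq_bigr => i ij; rewrite /nupd (negbTE ij). Qed.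

Lemma Phin_nupd n m y : Phin (nupd n m) y = P1 j m (y j) * Qn n y.
Proof. by rewrite Phin_split Qn_nupd /nupd eqxx. Qed.

Lemma Dj_C n C x : XX c x ->
  DJ (fun y => C * Phin n y) x
  = C * Qn n x * D1 (w j) (p j) (q j) (P1 j (n j)) (x j).
Proof.
move=> Xx.
have Xt : Xsym c (x j) := Xx j.
rewrite /Dj /partial.
have -> : (fun t => C * Phin n (upd x j t)) = (C * Qn n x) \*: P1 j (n j).
  apply/funext => t; rewrite Phin_split Qn_upd /upd eqxx /= -[RHS]/((C * Qn n x) * P1 j (n j) t); ring.
rewrite derive1E deriveZ; last exact: (der_P1 (Hp j).1 (Hq j) (Hphi j)).
rewrite -derive1E !Phin_split Qn_refl /refl eqxx /D1.
by rewrite /GRing.scale /=; ring.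
Qed.

Lemma XX_refl x : XX c x -> XX c (refl j x).
Proof. by move=> Xx i; rewrite /refl; case: eqP => _; [exact: Xsym_N | exact: Xx]. Qed.

Lemma Dj_local f g x : XX c x -> (forall y, XX c y -> f y = g y) ->
  DJ f x = DJ g x.
Proof.
move=> Xx fg.
have hp : partial j f x = partial j g x.
  apply: near_derive1; near=> t; apply: fg => i; rewrite /upd.
  case: eqP => _; last exact: Xx.
  near: t; exact: Xsym_nbhs (Xx j).
by rewrite /Dj hp (fg x Xx) (fg _ (XX_refl Xx)).
Unshelve. all: by end_near. Qed.

Local Notation s k := (Num.sqrt (lam j k.+1 - a j)).

Lemma stepZ n C x : XX c x -> n j = 0%N -> DJ (fun y => C * Phin n y) x = 0.
Proof.
move=> Xx nj0; rewrite Dj_C // nj0.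
rewrite (D1_zero (Hw j).1 (Hw j).2 (Hp j).1 (Hq j) (Hphi j) (Heig j) (Ha j) (Hip j) (Xx j)).
by rewrite mulr0.
Qed.

Lemma stepO n k C x : XX c x -> n j = k.*2.+1 ->
  DJ (fun y => C * Phin n y) x = (C * s k) * Phin (nupd n (k.+1).*2) x.
Proof.
move=> Xx nj; rewrite Dj_C // nj Phin_nupd.
rewrite (D1_odd (Hw j).1 (Hw j).2 (Hp j).1 (Hq j) (Hphi j) (Heig j) (Hlam j) (Ha j) k (Xx j)).
by ring.
Qed.

Lemma stepE n k C x : XX c x -> n j = (k.+1).*2 ->
  DJ (fun y => C * Phin n y) x = (C * - s k) * Phin (nupd n k.*2.+1) x.
Proof.
move=> Xx nj; rewrite Dj_C // nj Phin_nupd.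
rewrite (D1_evenS (w j) (p j) (q j) (Hphi j) (Hlam j) (Ha j) k (Xx j)).
by ring.
Qed.

End Multi.
Section Iter.
Variable R : realType.

Lemma iter_gen (T : Type) (U : set T) (D : (T -> R) -> (T -> R))
  (Ps : bool -> T -> R) (e : bool -> R) (b : bool) (cf : nat -> R) :
  (forall f g x, U x -> (forall y, U y -> f y = g y) -> D f x = D g x) ->
  (forall b' C x, U x -> D (fun y => C * Ps b' y) x = (C * e b') * Ps (~~ b') x) ->
  cf 0%N = 1 -> (forall N, cf N.+1 = cf N * e (b (+) odd N)) ->
  forall N x, U x -> iter N D (Ps b) x = cf N * Ps (b (+) odd N) x.
Proof.
move=> loc step cf0 cfS N; elim: N => [|N IH] x Ux.
  by rewrite /= cf0 mul1r addbF.
rewrite iterS (loc _ (fun y => cf N * Ps (b (+) odd N) y)) //.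
by rewrite step // cfS /= addbN.
Qed.

Definition sgn (nj N : nat) : R :=
  if ~~ odd N then (-1) ^+ N./2 else (-1) ^+ (nj + 1 + N.-1./2)%N.

Lemma sgn0 nj : sgn nj 0 = 1.
Proof. by []. Qed.

Lemma sgnS nj N : sgn nj N.+1 = sgn nj N * (if odd nj (+) odd N then 1 else -1).
Proof.
have [M [->|->]] : exists M, N = M.*2 \/ N = M.*2.+1.
  exists N./2; case: (boolP (odd N)) => h; [right|left];
  by rewrite -[N in LHS]odd_double_half ?h ?(negbTE h).
- rewrite /sgn /= odd_double /= doubleK addbF.
  rewrite !exprD expr1 -(signr_odd _ nj); case: (odd nj) => /=; rewrite ?expr0 ?expr1; ring.
- rewrite /sgn /= odd_double /= ?doubleK.
  rewrite !exprD expr1 exprS -(signr_odd _ nj); case: (odd nj) => /=; rewrite ?expr0 ?expr1; ring.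
Qed.


End Iter.
Lemma nupd_id d (j : 'I_d) (n : 'I_d -> nat) : nupd j n (n j) = n.
Proof. by apply/funext => i; rewrite /nupd; case: eqP => // ->. Qed.

Lemma nupd_nupd d (j : 'I_d) (n : 'I_d -> nat) m m' :
  nupd j (nupd j n m) m' = nupd j n m'.
Proof. by apply/funext => i; rewrite /nupd; case: eqP. Qed.

Lemma nupd_j d (j : 'I_d) (n : 'I_d -> nat) m : nupd j n m j = m.
Proof. by rewrite /nupd eqxx. Qed.

Lemma powR_sqrt (R : realType) (v : R) N : 0 <= v ->
  v `^ (N%:R / 2) = (Num.sqrt v) ^+ N.
Proof.
move=> v0; rewrite -{1}(sqr_sqrtr v0) -powR_mulrn ?sqrtr_ge0 // -powRrM.
have -> : (2%:R * (N%:R / 2) : R) = N%:R by field.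
by rewrite powR_mulrn ?sqrtr_ge0.
Qed.

Unset Implicit Arguments.
Set Strict Implicit.

Theorem mainTheorem5 (R : realType) (d : nat) (c : \bar R)
  (w p q : 'I_d -> R -> R) (a : 'I_d -> R) (lam : 'I_d -> nat -> R)
  (phi : 'I_d -> nat -> R -> R) :
  (0 < d)%N -> (0 < c)%E ->
  (forall i, Cn_on 2 (Xset c) (w i) /\ (forall x, Xset c x -> 0 < w i x)) ->
  (forall i, Cn_on 2 (Xset c) (p i) /\ (forall x, Xset c x -> p i x != 0)) ->
  (forall i, Cn_on 1 (Xset c) (q i)) ->
  (forall i, 0 <= a i) ->
  (forall i, ONB c (w i) (phi i)) ->
  (forall i k, Cinf_on (Xset c) (phi i k)) ->
  (forall i k x, Xset c x ->
     a i * phi i k x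
     + delta_star (w i) (p i) (q i) (delta (p i) (q i) (phi i k)) x
     = lam i k * phi i k x) ->
  (forall i k, lam i k < lam i k.+1) ->
  (forall i, lam i @ \oo --> +oo) ->
  (forall i k, L2 c (w i) (delta (p i) (q i) (phi i k))) ->
  (forall i k m,
     ip c (w i) (delta (p i) (q i) (phi i k)) (delta (p i) (q i) (phi i m))
     = ip c (w i) (delta_star (w i) (p i) (q i) (delta (p i) (q i) (phi i k)))
                  (phi i m)) ->
  (forall i, a i = lam i 0%N) ->
  forall (j : 'I_d) (N : nat) (n : 'I_d -> nat), (0 < N)%N ->
  forall x, XX c x ->
  iter N (Dj w p q j) (Phi p q a lam phi (fun i => (n i)%:Z)) x =
  if ~~ odd N then
    (-1) ^+ N./2 * (lam j (n j).+1./2 - a j) `^ (N%:R / 2)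
    * Phi p q a lam phi (fun i => (n i)%:Z) x
  else
    (-1) ^+ (n j + 1 + N.-1./2)%N * (lam j (n j).+1./2 - a j) `^ (N%:R / 2)
    * Phi p q a lam phi
        (fun i => (n i)%:Z - (if i == j then (-1) ^+ n j else 0)) x.
Proof.
move=> d0 c0 Hw Hp Hq Ha0 Honb Hphi Heig Hlam Hinf HL2 Hip Ha j N n N0 x Xx.
have loc : forall f g y, XX c y -> (forall z, XX c z -> f z = g z) ->
    Dj w p q j f y = Dj w p q j g y.
  by move=> f g y; exact: Dj_local.
change (Phi p q a lam phi (fun i => (n i)%:Z)) with (Phin p q a lam phi n).
have gen : forall k, (n j = k.*2.+1 \/ n j = (k.+1).*2) ->
  iter N (Dj w p q j) (Phin p q a lam phi n) x =
  (if ~~ odd N then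
    (-1) ^+ N./2 * (lam j (n j).+1./2 - a j) `^ (N%:R / 2)
    * Phin p q a lam phi n x
  else
    (-1) ^+ (n j + 1 + N.-1./2)%N * (lam j (n j).+1./2 - a j) `^ (N%:R / 2)
    * Phi p q a lam phi
        (fun i => (n i)%:Z - (if i == j then (-1) ^+ n j else 0)) x).
  move=> k hk.
  set s := Num.sqrt (lam j k.+1 - a j).
  set nO := nupd j n k.*2.+1; set nE := nupd j n (k.+1).*2.
  pose Ps (b : bool) := Phin p q a lam phi (if b then nO else nE).
  pose e (b : bool) := (if b then 1 else -1) * s.
  have step : forall b C y, XX c y ->
      Dj w p q j (fun z => C * Ps b z) y = (C * e b) * Ps (~~ b) y.
    move=> [] C y Xy /=.
    - rewrite (stepO Hw Hp Hq Hphi Heig Hlam Ha (k:=k)) //; last by rewrite /nO /nE nupd_j.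
      by rewrite nupd_nupd /e mul1r.
    - rewrite (stepE w Hp Hq Hphi Hlam Ha (k:=k)) //; last by rewrite /nO /nE nupd_j.
      by rewrite nupd_nupd /e mulN1r.
  set b := odd (n j).
  have hb : Phin p q a lam phi n = Ps b.
    rewrite /Ps /b /nO /nE; case: hk => hk.
    - have -> : odd (n j) = true by rewrite hk /= odd_double.
      by rewrite -hk nupd_id.
    - have -> : odd (n j) = false by rewrite hk odd_double.
      by rewrite -hk nupd_id.
  pose cf (M : nat) := sgn R (n j) M * s ^+ M.
  have cfS : forall M, cf M.+1 = cf M * e (b (+) odd M).
    move=> M; rewrite /cf sgnS exprS /e /b; move: (s ^+ M) (sgn R (n j) M) (if _ then _ else _) => sM X Y.
    by rewrite -!mulrA; congr (_ * _); rewrite [RHS]mulrC mulrA.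
  have cf0 : cf 0%N = 1 by rewrite /cf sgn0 expr0 mulr1.
  have it := iter_gen loc step cf0 cfS N Xx.
  rewrite hb it.
  have nj2 : (n j).+1./2 = k.+1.
    by case: hk => ->; rewrite /= ?doubleK ?uphalf_double.
  have la : a j < lam j k.+1.
    rewrite Ha; elim: (k) => [|k' IH]; first exact: Hlam.
    exact: lt_trans IH (Hlam _ _).
  rewrite nj2 powR_sqrt; last by rewrite subr_ge0 ltW.
  rewrite -/s.
  case: (boolP (odd N)) => hN /=.
  - rewrite /cf /sgn hN /= addbT; congr (_ * _).
    rewrite /Ps /b /Phin; congr (Phi _ _ _ _ _ _ x); apply/funext => i /=.
    rewrite /nE /nO /nupd; case: hk => hk.
    - have -> : odd (n j) = true by rewrite hk /= odd_double.
      rewrite /=; case: eqP => [->|_] /=; last by rewrite subr0.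
      rewrite hk -(signr_odd _ k.*2.+1) /= odd_double /= expr1 opprK.
      by rewrite -PoszD addn1 doubleS.
    - have -> : odd (n j) = false by rewrite hk odd_double.
      rewrite /=; case: eqP => [->|_] /=; last by rewrite subr0.
      rewrite hk -(signr_odd _ k.+1.*2) odd_double expr0 doubleS.
      by rewrite [in RHS]intS addrAC subrr add0r.
  - rewrite /cf /sgn hN /= addbF -hb; done.
have [nj0 | [[k nk] | [k nk]]] : n j = 0%N \/
    ((exists k, n j = k.*2.+1) \/ (exists k, n j = (k.+1).*2)).
  case: (boolP (odd (n j))) => h.
    by right; left; exists (n j)./2; rewrite -[n j in LHS]odd_double_half h.
  case e: ((n j)./2) => [|k].
    by left; rewrite -[n j]odd_double_half (negbTE h) e.
  by right; right; exists k; rewrite -[n j in LHS]odd_double_half (negbTE h) e.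
-
  have Z : forall M y, XX c y -> iter M.+1 (Dj w p q j) (Phin p q a lam phi n) y = 0.
    elim=> [|M IH] y Xy.
      rewrite /= (loc _ (fun z => 1 * Phin p q a lam phi n z)) //.
        exact: (stepZ Hw Hp Hq Hphi Heig Hip Ha).
      by move=> z _; rewrite mul1r.
    rewrite iterS (loc _ (fun z => 0 * Phin p q a lam phi n z)) //.
      exact: (stepZ Hw Hp Hq Hphi Heig Hip Ha).
    by move=> z Xz; rewrite IH // mul0r.
  clear gen; case: N N0 => // M _; rewrite Z // nj0 /= -Ha subrr powR0.
    by case: ifP => _; rewrite mulr0 mul0r.
  by rewrite mulf_neq0 // ?pnatr_eq0 // invr_eq0 pnatr_eq0.
- exact: gen k (or_introl nk).
- exact: gen k (or_intror nk).
Qed.
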